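(* Let $c\in\mathbb{R}$. (1) (Elliptic umbilic $D_4^-$.) Let $\boldsymbol\eta_c(x_1,x_2)=(x_1^2-x_2^2,\,-2x_1x_2+4cx_2)$. If $\mathbf y\in\mathbb{R}^2$ has exactly four preimages $\mathbf x_1,\dots,\mathbf x_4$ under $\boldsymbol\eta_c$, each with $\det[\mathrm{Jac}\,\boldsymbol\eta_c](\mathbf x_i)\ne0$, then $\mu_1+\mu_2+\mu_3+\mu_4=0$. (2) (Hyperbolic umbilic $D_4^+$.) Let $\boldsymbol\eta_c(x_1,x_2)=(x_1^2+2cx_2,\,x_2^2+2cx_1)$. If $\mathbf y\in\mathbb{R}^2$ has exactly four preimages $\mathbf x_1,\dots,\mathbf x_4$ under $\boldsymbol\eta_c$, each with nonvanishing Jacobian determinant, then $\mu_1+\mu_2+\mu_3+\mu_4=0$.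
   Context: The signed magnification of a preimage (lensed image) $\mathbf x_i$ of $\mathbf y$ is $\mu_i=1/\det[\mathrm{Jac}\,\boldsymbol\eta_c](\mathbf x_i)$. The maps above are the quantitative local forms of lensing maps near elliptic and hyperbolic umbilic caustics. *)

(* Defs.v *)
From Stdlib Require Import Reals Lra.
Open Scope R_scope.

Definition eta_ell (c : R) (p : R * R) : R * R :=
  let (x1, x2) := p in (x1 ^ 2 - x2 ^ 2, - 2 * x1 * x2 + 4 * c * x2).

Definition eta_hyp (c : R) (p : R * R) : R * R :=
  let (x1, x2) := p in (x1 ^ 2 + 2 * c * x2, x2 ^ 2 + 2 * c * x1).

Definition det2 (a b d e : R) : R := a * e - b * d.

(* Jacobian determinant of a map given by its four partial derivatives
   dFi/dxj evaluated at p. *)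
Definition jac_det (J11 J12 J21 J22 : R * R -> R) (p : R * R) : R :=
  det2 (J11 p) (J12 p) (J21 p) (J22 p).

(* Partial derivatives of eta_ell (certified below). *)
Definition ell_J11 (c : R) (p : R * R) : R := 2 * fst p.
Definition ell_J12 (c : R) (p : R * R) : R := - 2 * snd p.
Definition ell_J21 (c : R) (p : R * R) : R := - 2 * snd p.
Definition ell_J22 (c : R) (p : R * R) : R := - 2 * fst p + 4 * c.
Definition jac_ell (c : R) : R * R -> R :=
  jac_det (ell_J11 c) (ell_J12 c) (ell_J21 c) (ell_J22 c).

Definition hyp_J11 (c : R) (p : R * R) : R := 2 * fst p.
Definition hyp_J12 (c : R) (p : R * R) : R := 2 * c.
Definition hyp_J21 (c : R) (p : R * R) : R := 2 * c.
Definition hyp_J22 (c : R) (p : R * R) : R := 2 * snd p.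
Definition jac_hyp (c : R) : R * R -> R :=
  jac_det (hyp_J11 c) (hyp_J12 c) (hyp_J21 c) (hyp_J22 c).

Definition magnification (jac : R * R -> R) (x : R * R) : R := / jac x.

Definition exactly_four_preimages (F : R * R -> R * R) (y x1 x2 x3 x4 : R * R)
  : Prop :=
  x1 <> x2 /\ x1 <> x3 /\ x1 <> x4 /\ x2 <> x3 /\ x2 <> x4 /\ x3 <> x4 /\
  F x1 = y /\ F x2 = y /\ F x3 = y /\ F x4 = y /\
  (forall x, F x = y -> x = x1 \/ x = x2 \/ x = x3 \/ x = x4).

Lemma ell_partials (c x1 x2 : R) :
  derivable_pt_lim (fun t => fst (eta_ell c (t, x2))) x1 (ell_J11 c (x1, x2)) /\
  derivable_pt_lim (fun t => fst (eta_ell c (x1, t))) x2 (ell_J12 c (x1, x2)) /\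
  derivable_pt_lim (fun t => snd (eta_ell c (t, x2))) x1 (ell_J21 c (x1, x2)) /\
  derivable_pt_lim (fun t => snd (eta_ell c (x1, t))) x2 (ell_J22 c (x1, x2)).
Proof.
  unfold ell_J11, ell_J12, ell_J21, ell_J22; cbn [fst snd].
  cbv beta iota delta [eta_ell fst snd].
  repeat split.
  - replace (2 * x1) with (INR 2 * x1 ^ Init.Nat.pred 2 - 0) by (simpl; ring).
    apply (derivable_pt_lim_minus (fun t => t ^ 2) (fun _ => x2 ^ 2)).
    + apply derivable_pt_lim_pow.
    + apply derivable_pt_lim_const.
  - replace (-2 * x2) with (0 - INR 2 * x2 ^ Init.Nat.pred 2) by (simpl; ring).
    apply (derivable_pt_lim_minus (fun _ => x1 ^ 2) (fun t => t ^ 2)).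
    + apply derivable_pt_lim_const.
    + apply derivable_pt_lim_pow.
  - replace (-2 * x2) with (-2 * 1 * x2 + 0) by ring.
    apply (derivable_pt_lim_plus (fun t => -2 * t * x2) (fun _ => 4 * c * x2)).
    + apply (derivable_pt_lim_scal_right (fun t => -2 * t)).
      apply derivable_pt_lim_scal. apply derivable_pt_lim_id.
    + apply derivable_pt_lim_const.
  - replace (-2 * x1 + 4 * c) with (-2 * x1 * 1 + 4 * c * 1) by ring.
    apply (derivable_pt_lim_plus (fun t => -2 * x1 * t) (fun t => 4 * c * t));
      apply derivable_pt_lim_scal; apply derivable_pt_lim_id.
Qed.

Lemma hyp_partials (c x1 x2 : R) :
  derivable_pt_lim (fun t => fst (eta_hyp c (t, x2))) x1 (hyp_J11 c (x1, x2)) /\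
  derivable_pt_lim (fun t => fst (eta_hyp c (x1, t))) x2 (hyp_J12 c (x1, x2)) /\
  derivable_pt_lim (fun t => snd (eta_hyp c (t, x2))) x1 (hyp_J21 c (x1, x2)) /\
  derivable_pt_lim (fun t => snd (eta_hyp c (x1, t))) x2 (hyp_J22 c (x1, x2)).
Proof.
  unfold hyp_J11, hyp_J12, hyp_J21, hyp_J22; cbn [fst snd].
  cbv beta iota delta [eta_hyp fst snd].
  repeat split.
  - replace (2 * x1) with (INR 2 * x1 ^ Init.Nat.pred 2 + 0) by (simpl; ring).
    apply (derivable_pt_lim_plus (fun t => t ^ 2) (fun _ => 2 * c * x2)).
    + apply derivable_pt_lim_pow.
    + apply derivable_pt_lim_const.
  - assert (H := derivable_pt_lim_plus (fun _ => x1 ^ 2) (fun t => 2 * c * t)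
      _ _ _ (derivable_pt_lim_const _ x2)
      (derivable_pt_lim_scal _ (2 * c) _ _ (derivable_pt_lim_id _))).
    replace (0 + 2 * c * 1) with (2 * c) in H by ring. exact H.
  - assert (H := derivable_pt_lim_plus (fun _ => x2 ^ 2) (fun t => 2 * c * t)
      _ _ _ (derivable_pt_lim_const _ x1)
      (derivable_pt_lim_scal _ (2 * c) _ _ (derivable_pt_lim_id _))).
    replace (0 + 2 * c * 1) with (2 * c) in H by ring. exact H.
  - replace (2 * x2) with (INR 2 * x2 ^ Init.Nat.pred 2 + 0) by (simpl; ring).
    apply (derivable_pt_lim_plus (fun t => t ^ 2) (fun _ => 2 * c * x1)).
    + apply derivable_pt_lim_pow.
    + apply derivable_pt_lim_const.
Qed.

(* Main.v *)
Require Import Defs.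
From Stdlib Require Import Reals Lra.
Open Scope R_scope.

Lemma mul_nz (x y g : R) : x <> y -> (x - y) * g = 0 -> g = 0.
Proof. intros H E. destruct (Rmult_integral _ _ E) as [E'|E']; [lra|exact E']. Qed.

Lemma quartic_sum (A B C D al be t1 t2 t3 t4 : R) :
  t1 <> t2 -> t1 <> t3 -> t1 <> t4 -> t2 <> t3 -> t2 <> t4 -> t3 <> t4 ->
  t1^4 + A*t1^3 + B*t1^2 + C*t1 + D = 0 ->
  t2^4 + A*t2^3 + B*t2^2 + C*t2 + D = 0 ->
  t3^4 + A*t3^3 + B*t3^2 + C*t3 + D = 0 ->
  t4^4 + A*t4^3 + B*t4^2 + C*t4 + D = 0 ->
  (al*t1+be)/(4*t1^3+3*A*t1^2+2*B*t1+C) + (al*t2+be)/(4*t2^3+3*A*t2^2+2*B*t2+C)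
  + (al*t3+be)/(4*t3^3+3*A*t3^2+2*B*t3+C) + (al*t4+be)/(4*t4^3+3*A*t4^2+2*B*t4+C) = 0.
Proof.
  intros d12 d13 d14 d23 d24 d34 P1 P2 P3 P4.
  set (G := fun x y => (x^3+x^2*y+x*y^2+y^3) + A*(x^2+x*y+y^2) + B*(x+y) + C).
  assert (G12 : G t1 t2 = 0).
  { apply (mul_nz t1 t2); auto. unfold G. transitivity (0-0); [|ring].
    rewrite <- P1 at 1; rewrite <- P2; ring. }
  assert (G13 : G t1 t3 = 0).
  { apply (mul_nz t1 t3); auto. unfold G. transitivity (0-0); [|ring].
    rewrite <- P1 at 1; rewrite <- P3; ring. }
  assert (G14 : G t1 t4 = 0).
  { apply (mul_nz t1 t4); auto. unfold G. transitivity (0-0); [|ring].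
    rewrite <- P1 at 1; rewrite <- P4; ring. }
  set (H := fun x y z => (x^2+y^2+z^2+x*y+x*z+y*z) + A*(x+y+z) + B).
  assert (H123 : H t1 t2 t3 = 0).
  { apply (mul_nz t2 t3); auto. unfold H. transitivity (0-0); [|ring].
    rewrite <- G12 at 1; rewrite <- G13; unfold G; ring. }
  assert (H124 : H t1 t2 t4 = 0).
  { apply (mul_nz t2 t4); auto. unfold H. transitivity (0-0); [|ring].
    rewrite <- G12 at 1; rewrite <- G14; unfold G; ring. }
  assert (EA : t1+t2+t3+t4 + A = 0).
  { apply (mul_nz t3 t4); auto. transitivity (0-0); [|ring].
    rewrite <- H123 at 1; rewrite <- H124; unfold H; ring. }
  assert (A = -(t1+t2+t3+t4)) as ->  by lra.
  unfold H in H123.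
  assert (B = t1*t2+t1*t3+t1*t4+t2*t3+t2*t4+t3*t4) as -> by (apply Rminus_diag_uniq; rewrite <- H123; ring).
  unfold G in G12.
  assert (C = -(t1*t2*t3+t1*t2*t4+t1*t3*t4+t2*t3*t4)) as -> by (apply Rminus_diag_uniq; rewrite <- G12; ring).
  assert (E1 : forall a b c d : R, 4*a^3 + 3*(-(a+b+c+d))*a^2 + 2*(a*b+a*c+a*d+b*c+b*d+c*d)*a - (a*b*c+a*b*d+a*c*d+b*c*d) = (a-b)*(a-c)*(a-d)) by (intros; ring).
  replace (4 * t1 ^ 3 + 3 * - (t1 + t2 + t3 + t4) * t1 ^ 2 + 2 * (t1 * t2 + t1 * t3 + t1 * t4 + t2 * t3 + t2 * t4 + t3 * t4) * t1 + - (t1 * t2 * t3 + t1 * t2 * t4 + t1 * t3 * t4 + t2 * t3 * t4)) with ((t1-t2)*(t1-t3)*(t1-t4)) by ring.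
  replace (4 * t2 ^ 3 + 3 * - (t1 + t2 + t3 + t4) * t2 ^ 2 + 2 * (t1 * t2 + t1 * t3 + t1 * t4 + t2 * t3 + t2 * t4 + t3 * t4) * t2 + - (t1 * t2 * t3 + t1 * t2 * t4 + t1 * t3 * t4 + t2 * t3 * t4)) with ((t2-t1)*(t2-t3)*(t2-t4)) by ring.
  replace (4 * t3 ^ 3 + 3 * - (t1 + t2 + t3 + t4) * t3 ^ 2 + 2 * (t1 * t2 + t1 * t3 + t1 * t4 + t2 * t3 + t2 * t4 + t3 * t4) * t3 + - (t1 * t2 * t3 + t1 * t2 * t4 + t1 * t3 * t4 + t2 * t3 * t4)) with ((t3-t1)*(t3-t2)*(t3-t4)) by ring.
  replace (4 * t4 ^ 3 + 3 * - (t1 + t2 + t3 + t4) * t4 ^ 2 + 2 * (t1 * t2 + t1 * t3 + t1 * t4 + t2 * t3 + t2 * t4 + t3 * t4) * t4 + - (t1 * t2 * t3 + t1 * t2 * t4 + t1 * t3 * t4 + t2 * t3 * t4)) with ((t4-t1)*(t4-t2)*(t4-t3)) by ring.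
  field; repeat split; intro; lra.
Qed.

Lemma hyp_point c a b p q : c <> 0 -> eta_hyp c (p,q) = (a,b) -> jac_hyp c (p,q) <> 0 ->
  p^4 + 0*p^3 + (-2*a)*p^2 + (8*c^3)*p + (a^2-4*c^2*b) = 0 /\
  magnification (jac_hyp c) (p,q) = (0*p + -2*c)/(4*p^3+3*0*p^2+2*(-2*a)*p+8*c^3).
Proof.
  intros Hc E J. cbv beta iota delta [eta_hyp eta_ell] in E; injection E as E1 E2; change (p*(p*1)) with (p^2) in E1, E2; change (q*(q*1)) with (q^2) in E1, E2.
  unfold magnification, jac_hyp, jac_det, det2, hyp_J11, hyp_J12, hyp_J21, hyp_J22 in *; cbn [fst snd] in *.
  split.
  - replace (p ^ 4 + 0 * p ^ 3 + -2 * a * p ^ 2 + 8 * c ^ 3 * p + (a ^ 2 - 4 * c ^ 2 * b))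
      with ((p^2-a-2*c*q)*(p^2+2*c*q-a) + 4*c^2*(q^2+2*c*p-b)) by ring.
    rewrite E1, E2; ring.
  - replace (4 * p ^ 3 + 3 * 0 * p ^ 2 + 2 * (-2 * a) * p + 8 * c ^ 3)
      with (-2*c*(2*p*(2*q) - 2*c*(2*c)) + 4*p*(p^2+2*c*q-a)) by ring.
    rewrite E1, (Rminus_diag_eq a a eq_refl), Rmult_0_r, Rplus_0_r. field.
    repeat split; try apply Rmult_integral_contrapositive; try split; auto; try lra.
Qed.

Lemma ell_point c a b p q : b <> 0 -> eta_ell c (p,q) = (a,b) -> jac_ell c (p,q) <> 0 ->
  p^4 + (-4*c)*p^3 + (4*c^2-a)*p^2 + (4*a*c)*p + (-4*a*c^2 - b^2/4) = 0 /\
  magnification (jac_ell c) (p,q) = ((-1/2)*p + c)/(4*p^3+3*(-4*c)*p^2+2*(4*c^2-a)*p+4*a*c).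
Proof.
  intros Hb E J. cbv beta iota delta [eta_hyp eta_ell] in E; injection E as E1 E2; change (p*(p*1)) with (p^2) in E1, E2; change (q*(q*1)) with (q^2) in E1, E2.
  unfold magnification, jac_ell, jac_det, det2, ell_J11, ell_J12, ell_J21, ell_J22 in *; cbn [fst snd] in *.
  assert (Hp : p - 2*c <> 0) by (intro; apply Hb; rewrite <- E2; nra).
  split.
  - replace (p ^ 4 + -4 * c * p ^ 3 + (4 * c ^ 2 - a) * p ^ 2 + 4 * a * c * p + (-4 * a * c ^ 2 - b ^ 2 / 4))
      with ((p^2-q^2-a)*(p-2*c)^2 + (-(-2*p*q+4*c*q-b)/2)*(q*(p-2*c) - b/2)) by field.
    rewrite E1, E2; field.
  - replace (4 * p ^ 3 + 3 * (-4 * c) * p ^ 2 + 2 * (4 * c ^ 2 - a) * p + 4 * a * c)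
      with (-(p-2*c)*((2*p)*(-2*p+4*c) - (-2*q)*(-2*q))/2 + 2*(p-2*c)*(p^2-q^2-a)) by field.
    rewrite E1, (Rminus_diag_eq a a eq_refl), Rmult_0_r, Rplus_0_r. field.
    repeat split; try apply Rmult_integral_contrapositive; try split; auto; try lra.
Qed.

Lemma sq_eq x y : x^2 = y^2 -> x = y \/ x = -y.
Proof.
  intro H. assert (E : (x - y) * (x + y) = 0) by (rewrite <- Rminus_diag_eq with (r1:=x^2) (r2:=y^2) by exact H; ring).
  destruct (Rmult_integral _ _ E); [left|right]; lra.
Qed.

Lemma sqrt_sq x : 0 <= x -> sqrt x ^ 2 = x.
Proof. intro H. simpl. rewrite Rmult_1_r. exact (Rsqr_sqrt x H). Qed.

Lemma ell_b0_cases c a p q : eta_ell c (p,q) = (a,0) ->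
  (q = 0 /\ sqrt a ^ 2 = a /\ (p = sqrt a \/ p = - sqrt a)) \/
  (p = 2*c /\ sqrt (4*c^2-a) ^ 2 = 4*c^2-a /\ (q = sqrt (4*c^2-a) \/ q = - sqrt (4*c^2-a))).
Proof.
  intro E. cbv beta iota delta [eta_ell] in E. injection E as E1 E2.
  change (p*(p*1)) with (p^2) in E1. change (q*(q*1)) with (q^2) in E1.
  assert (F : q * (4*c - 2*p) = 0) by (rewrite <- E2; ring).
  destruct (Rmult_integral _ _ F) as [Hq|Hp].
  - left. subst q. assert (Ha : p^2 = a) by (rewrite <- E1; ring).
    assert (S : sqrt a ^ 2 = a) by (apply sqrt_sq; rewrite <- Ha; apply pow2_ge_0).
    repeat split; auto. apply sq_eq. congruence.
  - right. assert (Hp' : p = 2*c) by lra. subst p.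
    assert (Hq : q^2 = 4*c^2-a) by (rewrite <- E1; ring).
    assert (S : sqrt (4*c^2-a) ^ 2 = 4*c^2-a) by (apply sqrt_sq; rewrite <- Hq; apply pow2_ge_0).
    repeat split; auto. apply sq_eq. congruence.
Qed.

Lemma ell_deg c r w : w^2 = 4*c^2 - r^2 ->
  jac_ell c (r,0) <> 0 -> jac_ell c (-r,0) <> 0 -> jac_ell c (2*c,w) <> 0 -> jac_ell c (2*c,-w) <> 0 ->
  magnification (jac_ell c) (r,0) + magnification (jac_ell c) (-r,0) +
  magnification (jac_ell c) (2*c,w) + magnification (jac_ell c) (2*c,-w) = 0.
Proof.
  unfold magnification, jac_ell, jac_det, det2, ell_J11, ell_J12, ell_J21, ell_J22; cbn [fst snd].
  intros Hw J1 J2 J3 J4.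
  assert (Eq: 2 * (2 * c) * (-2 * (2 * c) + 4 * c) - -2 * w * (-2 * w) = -4*w^2) by ring; rewrite Eq in *; clear Eq.
  assert (Eq: 2 * (2 * c) * (-2 * (2 * c) + 4 * c) - -2 * - w * (-2 * - w) = -4*w^2) by ring; rewrite Eq in *; clear Eq.
  rewrite Hw in *.
  assert (Eq: 2 * r * (-2 * r + 4 * c) - -2 * 0 * (-2 * 0) = 4*r*(2*c-r)) by ring; rewrite Eq in *; clear Eq.
  assert (Eq: 2 * - r * (-2 * - r + 4 * c) - -2 * 0 * (-2 * 0) = -4*r*(2*c+r)) by ring; rewrite Eq in *; clear Eq.
  assert (r <> 0) by (intro; apply J1; subst; ring).
  assert (2*c-r <> 0) by (intro Z; apply J1; rewrite Z; ring).
  assert (2*c+r <> 0) by (intro Z; apply J2; rewrite Z; ring).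
  replace (-4*(4*c^2-r^2)) with (-4*(2*c-r)*(2*c+r)) by ring.
  field. repeat split; auto.
Qed.

Lemma hyp_c0_cases a b p q p1 q1 : eta_hyp 0 (p,q) = (a,b) -> eta_hyp 0 (p1,q1) = (a,b) ->
  (p = p1 \/ p = -p1) /\ (q = q1 \/ q = -q1).
Proof.
  intros E F. cbv beta iota delta [eta_hyp] in E, F. injection E as E1 E2. injection F as F1 F2.
  split; apply sq_eq; simpl; lra.
Qed.

Lemma hyp_deg p q :
  jac_hyp 0 (p,q) <> 0 ->
  magnification (jac_hyp 0) (p,q) + magnification (jac_hyp 0) (-p,q) +
  magnification (jac_hyp 0) (p,-q) + magnification (jac_hyp 0) (-p,-q) = 0.
Proof.
  unfold magnification, jac_hyp, jac_det, det2, hyp_J11, hyp_J12, hyp_J21, hyp_J22; cbn [fst snd].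
  intro J.
  replace (2 * - p * (2 * q) - 2 * 0 * (2 * 0)) with (-(2 * p * (2 * q) - 2 * 0 * (2 * 0))) by ring.
  replace (2 * p * (2 * - q) - 2 * 0 * (2 * 0)) with (-(2 * p * (2 * q) - 2 * 0 * (2 * 0))) by ring.
  replace (2 * - p * (2 * - q) - 2 * 0 * (2 * 0)) with ((2 * p * (2 * q) - 2 * 0 * (2 * 0))) by ring.
  rewrite Rinv_opp. ring.
Qed.

Lemma hyp_dist c p q p' q' y : c <> 0 -> eta_hyp c (p,q) = y -> eta_hyp c (p',q') = y ->
  (p,q) <> (p',q') -> p <> p'.
Proof.
  intros Hc E F N Hp. subst p'. apply N. f_equal.
  cbv beta iota delta [eta_hyp] in E, F. rewrite <- F in E. injection E as E1 E2.
  apply (Rmult_eq_reg_l (2*c)); [lra|lra].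
Qed.

Lemma ell_dist c p q p' q' a b : b <> 0 -> eta_ell c (p,q) = (a,b) -> eta_ell c (p',q') = (a,b) ->
  (p,q) <> (p',q') -> p <> p'.
Proof.
  intros Hb E F N Hp. subst p'. apply N. f_equal.
  cbv beta iota delta [eta_ell] in E, F. injection E as E1 E2. injection F as F1 F2.
  assert (K : 4*c - 2*p <> 0) by (intro K; apply Hb; rewrite <- E2; nra).
  apply (Rmult_eq_reg_l (4*c-2*p)); [nra|exact K].
Qed.

Ltac dupkill := match goal with H : ?x <> ?x |- _ => exfalso; exact (H eq_refl) end.

Theorem theorem8p1 (c : R) :
  (forall y x1 x2 x3 x4 : R * R,
     exactly_four_preimages (eta_ell c) y x1 x2 x3 x4 ->
     jac_ell c x1 <> 0 -> jac_ell c x2 <> 0 ->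
     jac_ell c x3 <> 0 -> jac_ell c x4 <> 0 ->
     magnification (jac_ell c) x1 + magnification (jac_ell c) x2 +
     magnification (jac_ell c) x3 + magnification (jac_ell c) x4 = 0)
  /\
  (forall y x1 x2 x3 x4 : R * R,
     exactly_four_preimages (eta_hyp c) y x1 x2 x3 x4 ->
     jac_hyp c x1 <> 0 -> jac_hyp c x2 <> 0 ->
     jac_hyp c x3 <> 0 -> jac_hyp c x4 <> 0 ->
     magnification (jac_hyp c) x1 + magnification (jac_hyp c) x2 +
     magnification (jac_hyp c) x3 + magnification (jac_hyp c) x4 = 0).
Proof.
  split.
  - intros [a b] [p1 q1] [p2 q2] [p3 q3] [p4 q4] H J1 J2 J3 J4.
    destruct H as (d12&d13&d14&d23&d24&d34&E1&E2&E3&E4&_).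
    destruct (Req_dec b 0) as [Hb|Hb].
    + subst b.
      destruct (ell_b0_cases _ _ _ _ E1) as [(->&S1&[->| ->])|(->&S1&[->| ->])];
      destruct (ell_b0_cases _ _ _ _ E2) as [(->&S2&[->| ->])|(->&S2&[->| ->])];
      destruct (ell_b0_cases _ _ _ _ E3) as [(->&S3&[->| ->])|(->&S3&[->| ->])];
      destruct (ell_b0_cases _ _ _ _ E4) as [(->&S4&[->| ->])|(->&S4&[->| ->])];
      try dupkill;
      (pose proof (ell_deg c (sqrt a) (sqrt (4*c^2-a)) ltac:(lra)
        ltac:(assumption) ltac:(assumption) ltac:(assumption) ltac:(assumption)); lra).
    + destruct (ell_point _ _ _ _ _ Hb E1 J1) as [P1 ->].
      destruct (ell_point _ _ _ _ _ Hb E2 J2) as [P2 ->].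
      destruct (ell_point _ _ _ _ _ Hb E3 J3) as [P3 ->].
      destruct (ell_point _ _ _ _ _ Hb E4 J4) as [P4 ->].
      eapply quartic_sum; [ | | | | | | exact P1 | exact P2 | exact P3 | exact P4]; eapply ell_dist; eauto.
  - intros [a b] [p1 q1] [p2 q2] [p3 q3] [p4 q4] H J1 J2 J3 J4.
    destruct H as (d12&d13&d14&d23&d24&d34&E1&E2&E3&E4&_).
    destruct (Req_dec c 0) as [Hc|Hc].
    + subst c.
      destruct (hyp_c0_cases _ _ _ _ _ _ E2 E1) as [[->| ->][->| ->]];
      destruct (hyp_c0_cases _ _ _ _ _ _ E3 E1) as [[->| ->][->| ->]];
      destruct (hyp_c0_cases _ _ _ _ _ _ E4 E1) as [[->| ->][->| ->]];
      try dupkill; (pose proof (hyp_deg p1 q1 J1); lra).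
    + destruct (hyp_point _ _ _ _ _ Hc E1 J1) as [P1 ->].
      destruct (hyp_point _ _ _ _ _ Hc E2 J2) as [P2 ->].
      destruct (hyp_point _ _ _ _ _ Hc E3 J3) as [P3 ->].
      destruct (hyp_point _ _ _ _ _ Hc E4 J4) as [P4 ->].
      eapply quartic_sum; [ | | | | | | exact P1 | exact P2 | exact P3 | exact P4]; eapply hyp_dist; eauto.
Qed.
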